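(* Let $N\ge2$, $d\ge1$, and let $\tilde\psi:\mathbb{R}\to\mathbb{R}$ be a positive, bounded, continuous function with $\tilde K:=\|\tilde\psi\|_\infty$ satisfying $$\int_0^\infty\min_{r\in[0,x]}\tilde\psi(r)\,dx=+\infty.$$ Let $\{t_n\}_{n\in\mathbb{N}_0}$ be an increasing sequence of nonnegative numbers with $t_0=0$, $t_n\to\infty$, and define $\alpha:[0,\infty)\to\{-1,1\}$ by $\alpha(0)=1$, $\alpha(t)=1$ on $(t_{2n},t_{2n+1})$, $\alpha(t)=-1$ on $[t_{2n+1},t_{2n+2}]$, $n\in\mathbb{N}_0$. Assume $$t_{2n+2}-t_{2n+1}<\frac{\ln2}{\tilde K},\qquad t_{2n+1}-t_{2n}>\frac1{\tilde K}\qquad\forall n\in\mathbb{N}_0,$$ and $$\sum_{p=0}^{\infty}\ln\left(\frac{e^{\tilde K(t_{2p+2}-t_{2p+1})}}{2-e^{\tilde K(t_{2p+2}-t_{2p+1})}}\right)<+\infty.$$ Then every solution $\{(x_i,v_i)\}_{i=1,\dots,N}$ of $$\frac{d}{dt}x_i(t)=v_i(t),\qquad \frac{d}{dt}v_i(t)=\frac{1}{N-1}\sum_{j\ne i}\alpha(t)\,\tilde\psi(|x_i(t)-x_j(t)|)\,(v_j(t)-v_i(t)),\quad t>0,$$ with $x_i(0)=x_i^0$, $v_i(0)=v_i^0\in\mathbb{R}^d$, exhibits asymptotic flocking: there is $d^*>0$ with $\sup_{t\ge0}d_X(t)\le d^*$, and $\lim_{t\to\infty}d_V(t)=0$, where $d_X(t):=\max_{i,j}|x_i(t)-x_j(t)|$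 and $d_V(t):=\max_{i,j}|v_i(t)-v_j(t)|$.
   Context: $\mathbb{N}_0=\{0,1,2,\dots\}$. A solution is a continuous function, $C^1$ on each interval $(t_n,t_{n+1})$, satisfying the system there. *)

(* Defs.v *)
From Stdlib Require Import Reals Lra Lia Arith ClassicalEpsilon.
From Coquelicot Require Import Coquelicot.
Open Scope R_scope.

Fixpoint rsum (n : nat) (f : nat -> R) : R :=
  match n with O => 0 | S m => rsum m f + f m end.

(* rmax n f = max (0, f 0, ..., f (n-1)); used only for nonnegative f *)
Fixpoint rmax (n : nat) (f : nat -> R) : R :=
  match n with O => 0 | S m => Rmax (rmax m f) (f m) end.

(* Euclidean distance in R^d between y and z at time t;
   a vector of R^d is given by its components k = 0..d-1 *)
Definition edist (d : nat) (y z : nat -> R -> R) (t : R) : R :=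
  sqrt (rsum d (fun k => (y k t - z k t) ^ 2)).

Definition alpha (ts : nat -> R) (t : R) : R :=
  match excluded_middle_informative
          (exists n : nat, ts (2 * n + 1)%nat <= t <= ts (2 * n + 2)%nat) with
  | left _ => -1
  | right _ => 1
  end.

(* min_{r in [0,x]} psi(r) (attained since psi is continuous) *)
Definition psi_min (psi : R -> R) (x : R) : R :=
  real (Glb_Rbar (fun y => exists r, 0 <= r <= x /\ y = psi r)).

Definition cont_nonneg (f : R -> R) : Prop :=
  forall t, 0 <= t -> forall eps, 0 < eps ->
    exists delta, 0 < delta /\
      forall s, 0 <= s -> Rabs (s - t) < delta -> Rabs (f s - f t) < eps.

(* x i k t, v i k t : k-th component of position / velocity of agent i at time t *)
Definition is_solution (N d : nat) (psi : R -> R) (ts : nat -> R)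
  (x v : nat -> nat -> R -> R) : Prop :=
  forall i k, (i < N)%nat -> (k < d)%nat ->
    cont_nonneg (x i k) /\ cont_nonneg (v i k) /\
    forall n t, ts n < t < ts (S n) ->
      is_derive (x i k) t (v i k t) /\
      is_derive (v i k) t
        (/ (INR N - 1) *
         rsum N (fun j => if Nat.eqb j i then 0 else
                   alpha ts t * psi (edist d (x i) (x j) t) *
                   (v j k t - v i k t))) /\
      continuous (Derive (x i k)) t /\
      continuous (Derive (v i k)) t.

Definition dX (N d : nat) (x : nat -> nat -> R -> R) (t : R) : R :=
  rmax N (fun i => rmax N (fun j => edist d (x i) (x j) t)).

(* Main.v *)
Require Import Defs.
From Stdlib Require Import Reals Lra Lia Arith ClassicalEpsilon Classical.
From Coquelicot Require Import Coquelicot.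
Open Scope R_scope.


Lemma rsum_ext n f g : (forall m, (m < n)%nat -> f m = g m) -> rsum n f = rsum n g.
Proof. induction n; simpl; intros H; auto. rewrite IHn by (intros; apply H; lia). rewrite H by lia. auto. Qed.
Lemma rsum_plus n f g : rsum n (fun m => f m + g m) = rsum n f + rsum n g.
Proof. induction n; simpl; [ring|rewrite IHn; ring]. Qed.
Lemma rsum_minus n f g : rsum n (fun m => f m - g m) = rsum n f - rsum n g.
Proof. induction n; simpl; [ring|rewrite IHn; ring]. Qed.
Lemma rsum_scal n c f : rsum n (fun m => c * f m) = c * rsum n f.
Proof. induction n; simpl; [ring|rewrite IHn; ring]. Qed.
Lemma rsum_const n c : rsum n (fun _ => c) = INR n * c.
Proof. induction n; simpl rsum; [simpl; ring|rewrite IHn, S_INR; ring]. Qed.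
Lemma rsum_le n f g : (forall m, (m < n)%nat -> f m <= g m) -> rsum n f <= rsum n g.
Proof. induction n; simpl; intros H; [lra|]. apply Rplus_le_compat; [apply IHn; intros; apply H; lia| apply H; lia]. Qed.
Lemma rsum_nonneg n f : (forall m, (m < n)%nat -> 0 <= f m) -> 0 <= rsum n f.
Proof. intros H. replace 0 with (rsum n (fun _ => 0)). apply rsum_le; auto. rewrite rsum_const; ring. Qed.
Lemma rsum_single n f m : (forall m, (m < n)%nat -> 0 <= f m) -> (m < n)%nat -> f m <= rsum n f.
Proof. induction n; simpl; intros H Hm; [lia|].
  destruct (Nat.eq_dec m n). subst. assert (0 <= rsum n f) by (apply rsum_nonneg; intros; apply H; lia). lra.
  assert (f m <= rsum n f) by (apply IHn; [intros; apply H; lia| lia]). assert (0 <= f n) by (apply H; lia). lra. Qed.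
Lemma rsum_exch n m (F : nat -> nat -> R) :
  rsum n (fun i => rsum m (fun j => F i j)) = rsum m (fun j => rsum n (fun i => F i j)).
Proof. induction n; simpl. rewrite rsum_const; ring. rewrite IHn, <- rsum_plus. reflexivity. Qed.
Lemma rmax_le n f B : 0 <= B -> (forall m, (m < n)%nat -> f m <= B) -> rmax n f <= B.
Proof. induction n; simpl; intros HB H; auto. apply Rmax_lub; [apply IHn; auto; intros; apply H; lia| apply H; lia]. Qed.
Lemma rmax_nonneg n f : 0 <= rmax n f.
Proof. induction n; simpl; [lra|]. eapply Rle_trans; [apply IHn|apply Rmax_l]. Qed.

Lemma D_ext (f : R -> R) (x a b : R) : is_derive f x a -> a = b -> is_derive f x b.
Proof. intros; subst; auto. Qed.
Lemma D_plus (f g : R -> R) (x a b : R) : is_derive f x a -> is_derive g x b -> is_derive (fun t => f t + g t) x (a + b).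
Proof. intros. apply (is_derive_plus f g x a b); auto. Qed.
Lemma D_minus (f g : R -> R) (x a b : R) : is_derive f x a -> is_derive g x b -> is_derive (fun t => f t - g t) x (a - b).
Proof. intros. apply (is_derive_minus f g x a b); auto. Qed.
Lemma D_mult (f g : R -> R) (x a b : R) : is_derive f x a -> is_derive g x b -> is_derive (fun t => f t * g t) x (a * g x + f x * b).
Proof. intros. apply (is_derive_mult f g x a b); auto. intros; apply Rmult_comm. Qed.
Lemma D_comp (f g : R -> R) (x a b : R) : is_derive f (g x) a -> is_derive g x b -> is_derive (fun t => f (g t)) x (b * a).
Proof. intros. apply (is_derive_comp f g x a b); auto. Qed.
Lemma D_const (c : R) x : is_derive (fun _ => c) x 0.
Proof. apply (is_derive_const c x). Qed.
Lemma D_id (x : R) : is_derive (fun t => t) x 1.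
Proof. apply (is_derive_id x). Qed.
Lemma D_rsum n (f : nat -> R -> R) f' x :
  (forall m, (m < n)%nat -> is_derive (f m) x (f' m)) ->
  is_derive (fun t => rsum n (fun m => f m t)) x (rsum n f').
Proof. induction n; simpl; intros H. apply D_const.
  apply D_plus. apply IHn; intros; apply H; lia. apply H; lia. Qed.

Lemma cont_eps h y : continuous h y -> forall eps, 0 < eps -> exists delta, 0 < delta /\
   forall z, Rabs (z - y) < delta -> Rabs (h z - h y) < eps.
Proof. intros H eps He.
  assert (L := H (ball (h y) (mkposreal eps He)) (locally_ball _ _)).
  destruct L as [del Hd]. exists del. split. apply cond_pos. intros z Hz. apply (Hd z Hz). Qed.

Lemma cn_const c : cont_nonneg (fun _ => c).
Proof. intros t _ e He. exists 1. split. lra. intros. rewrite Rminus_diag, Rabs_R0; auto. Qed.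
Lemma cn_id : cont_nonneg (fun t => t).
Proof. intros t _ e He. exists e. split; auto. Qed.
Lemma cn_plus f g : cont_nonneg f -> cont_nonneg g -> cont_nonneg (fun t => f t + g t).
Proof. intros Hf Hg t Ht e He. destruct (Hf t Ht (e/2)) as [d1 [Hd1 H1]]. lra.
  destruct (Hg t Ht (e/2)) as [d2 [Hd2 H2]]. lra.
  exists (Rmin d1 d2). split. apply Rmin_pos; auto. intros s Hs Hst.
  assert (A := H1 s Hs (Rlt_le_trans _ _ _ Hst (Rmin_l _ _))).
  assert (B := H2 s Hs (Rlt_le_trans _ _ _ Hst (Rmin_r _ _))).
  replace (f s + g s - (f t + g t)) with ((f s - f t) + (g s - g t)) by ring.
  eapply Rle_lt_trans. apply Rabs_triang. lra. Qed.
Lemma cn_comp h f : cont_nonneg f -> (forall y, continuous h y) -> cont_nonneg (fun t => h (f t)).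
Proof. intros Hf Hh t Ht e He. destruct (cont_eps h (f t) (Hh _) e He) as [d1 [Hd1 H1]].
  destruct (Hf t Ht d1 Hd1) as [d2 [Hd2 H2]]. exists d2. split; auto. Qed.
Lemma cn_scal c f : cont_nonneg f -> cont_nonneg (fun t => c * f t).
Proof. intros. apply (cn_comp (fun y => c * y)); auto. intros y.
  apply continuity_pt_filterlim. apply continuity_pt_mult. apply continuity_pt_const; intros ??; auto. apply continuity_pt_id. Qed.
Lemma cn_sq f : cont_nonneg f -> cont_nonneg (fun t => f t * f t).
Proof. intros. apply (cn_comp (fun y => y * y)); auto. intros y.
  apply continuity_pt_filterlim. apply continuity_pt_mult; apply continuity_pt_id. Qed.
Lemma cn_mult f g : cont_nonneg f -> cont_nonneg g -> cont_nonneg (fun t => f t * g t).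
Proof. intros Hf Hg.
  assert (E: forall t, f t * g t = /4 * ((f t + g t) * (f t + g t)) + (-/4) * ((f t + -1 * g t) * (f t + -1 * g t))) by (intros; field).
  intros t Ht e He. destruct (cn_plus _ _ (cn_scal (/4) _ (cn_sq _ (cn_plus _ _ Hf Hg)))
     (cn_scal (-/4) _ (cn_sq _ (cn_plus _ _ Hf (cn_scal (-1) _ Hg)))) t Ht e He) as [d [Hd H]].
  exists d. split; auto. intros s Hs Hst. rewrite !E. apply H; auto. Qed.
Lemma cn_minus f g : cont_nonneg f -> cont_nonneg g -> cont_nonneg (fun t => f t - g t).
Proof. intros. intros t Ht e He. destruct (cn_plus _ _ H (cn_scal (-1) _ H0) t Ht e He) as [d [Hd H1]].
  exists d; split; auto. intros s Hs Hst. replace (f s - g s - (f t - g t)) with (f s + -1 * g s - (f t + -1 * g t)) by ring. auto. Qed.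
Lemma cn_rsum n (f : nat -> R -> R) : (forall m, (m < n)%nat -> cont_nonneg (f m)) ->
  cont_nonneg (fun t => rsum n (fun m => f m t)).
Proof. induction n; simpl; intros H. apply cn_const. apply cn_plus. apply IHn; intros; apply H; lia. apply H; lia. Qed.
Lemma cn_ext f g : cont_nonneg f -> (forall t, f t = g t) -> cont_nonneg g.
Proof. intros H E t Ht e He. destruct (H t Ht e He) as [d [Hd H1]]. exists d. split; auto. intros. rewrite <- !E. auto. Qed.

Lemma ML (g g' : R -> R) a b : 0 <= a -> a < b -> cont_nonneg g ->
  (forall t, a < t < b -> is_derive g t (g' t)) -> (forall t, a < t < b -> g' t <= 0) -> g b <= g a.
Proof. intros Ha Hab Hc Hd Hneg.
  assert (Inner: forall a' b', a < a' -> a' < b' -> b' < b -> g b' <= g a').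
  { intros a' b' H1 H2 H3. destruct (MVT_gen g a' b' g') as [c [Hc1 Hc2]].
    - rewrite Rmin_left, Rmax_right by lra. intros; apply Hd; lra.
    - rewrite Rmin_left, Rmax_right by lra. intros. apply continuity_pt_filterlim.
      apply (ex_derive_continuous (K:=R_AbsRing) (V:=R_NormedModule)). eexists. apply Hd. lra.
    - rewrite Rmin_left, Rmax_right in Hc1 by lra.
      assert (g' c <= 0) by (apply Hneg; lra). nra. }
  destruct (Rle_or_lt (g b) (g a)) as [H|H]; auto. exfalso.
  set (eta := (g b - g a) / 3).
  destruct (Hc a Ha eta) as [d1 [Hd1 H1]]. unfold eta; lra.
  destruct (Hc b (ltac:(lra)) eta) as [d2 [Hd2 H2]]. unfold eta; lra.
  set (h := Rmin (Rmin d1 d2) ((b - a)/3)).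
  assert (hp : 0 < h). { unfold h. repeat apply Rmin_pos; lra. }
  assert (h1 : h <= d1) by (unfold h; eapply Rle_trans; [apply Rmin_l| apply Rmin_l]).
  assert (h2 : h <= d2) by (unfold h; eapply Rle_trans; [apply Rmin_l| apply Rmin_r]).
  assert (h3 : h <= (b-a)/3) by (unfold h; apply Rmin_r).
  assert (A := H1 (a + h/2) ltac:(lra) ltac:(rewrite Rabs_right; lra)).
  assert (B := H2 (b - h/2) ltac:(lra) ltac:(rewrite Rabs_left; lra)).
  assert (C := Inner (a + h/2) (b - h/2) ltac:(lra) ltac:(lra) ltac:(lra)).
  apply Rabs_def2 in A. apply Rabs_def2 in B. unfold eta in *. lra. Qed.

Lemma ML2 (g g' : R -> R) a b t : 0 <= a -> a <= t -> t <= b -> cont_nonneg g ->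
  (forall s, a < s < b -> is_derive g s (g' s)) -> (forall s, a < s < b -> g' s <= 0) -> g t <= g a.
Proof. intros. destruct (Req_dec a t). subst; lra. apply (ML g g'); auto; try lra.
  intros; apply H3; lra. intros; apply H4; lra. Qed.

Lemma cont_pt (psi : R -> R) : (forall r, continuous psi r) -> forall c, continuity_pt psi c.
Proof. intros H c. apply continuity_pt_filterlim. apply H. Qed.

Lemma pm_attain psi x : (forall r, continuous psi r) -> 0 <= x ->
  (exists r, 0 <= r <= x /\ psi_min psi x = psi r) /\ (forall r, 0 <= r <= x -> psi_min psi x <= psi r).
Proof. intros Hc Hx. destruct (continuity_ab_min psi 0 x Hx (fun c _ => cont_pt psi Hc c)) as [mx [H1 H2]].
  assert (E : psi_min psi x = psi mx).
  { unfold psi_min. rewrite (is_glb_Rbar_unique _ (Finite (psi mx))). reflexivity.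
    split. intros y [r [Hr ->]]. simpl. apply H1; auto.
    intros b Hb. apply Hb. exists mx. split; auto. }
  split. exists mx. auto. intros r Hr. rewrite E. apply H1; auto. Qed.

Lemma pm_mono psi y y' : (forall r, continuous psi r) -> 0 <= y -> y <= y' -> psi_min psi y' <= psi_min psi y.
Proof. intros Hc Hy Hyy. destruct (pm_attain psi y Hc Hy) as [[r [Hr E]] _].
  rewrite E. apply (pm_attain psi y' Hc ltac:(lra)). lra. Qed.

Lemma pm_cont psi y0 : (forall r, continuous psi r) -> 0 <= y0 -> forall eps, 0 < eps ->
  exists delta, 0 < delta /\ forall y, 0 <= y -> Rabs (y - y0) < delta -> Rabs (psi_min psi y - psi_min psi y0) < eps.
Proof. intros Hc Hy0 eps He.
  destruct (pm_attain psi y0 Hc Hy0) as [[r0 [Hr0 E0]] B0].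
  destruct (cont_eps psi y0 (Hc y0) eps He) as [d1 [Hd1 H1]].
  destruct (cont_eps psi r0 (Hc r0) eps He) as [d2 [Hd2 H2]].
  exists (Rmin d1 d2). split. apply Rmin_pos; auto. intros y Hy Hyd.
  assert (Hd1' : Rabs (y - y0) < d1) by (eapply Rlt_le_trans; [apply Hyd| apply Rmin_l]).
  assert (Hd2' : Rabs (y - y0) < d2) by (eapply Rlt_le_trans; [apply Hyd| apply Rmin_r]).
  destruct (Rle_or_lt y0 y) as [Hle|Hlt].
  - assert (M : psi_min psi y <= psi_min psi y0) by (apply pm_mono; auto).
    destruct (pm_attain psi y Hc Hy) as [[r [Hr E]] _].
    assert (psi_min psi y0 - eps < psi_min psi y).
    { rewrite E. destruct (Rle_or_lt r y0).
      - assert (psi_min psi y0 <= psi r) by (apply B0; lra). lra.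
      - assert (Rabs (r - y0) <= Rabs (y - y0)) by (rewrite !Rabs_right; lra).
        assert (Rabs (r - y0) < d1) by lra.
        assert (A := H1 r H3). apply Rabs_def2 in A. assert (psi_min psi y0 <= psi y0) by (apply B0; lra). lra. }
    apply Rabs_def1; lra.
  - assert (M : psi_min psi y0 <= psi_min psi y) by (apply pm_mono; auto; lra).
    assert (psi_min psi y < psi_min psi y0 + eps).
    { destruct (Rle_or_lt r0 y).
      - assert (psi_min psi y <= psi r0) by (apply (pm_attain psi y Hc Hy); lra). lra.
      - assert (psi_min psi y <= psi y) by (apply (pm_attain psi y Hc Hy); lra).
        assert (Rabs (y - r0) <= Rabs (y - y0)) by (rewrite !Rabs_left; lra).
        assert (Rabs (y - r0) < d2) by lra.
        assert (A := H2 y ltac:(assumption)). apply Rabs_def2 in A. lra. }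
    apply Rabs_def1; lra. Qed.

Definition gm psi y := psi_min psi (Rabs y).
Definition Phi psi y := RInt (gm psi) 0 y.

Lemma gm_cont psi : (forall r, continuous psi r) -> forall z, continuous (gm psi) z.
Proof. intros Hc z. apply continuity_pt_filterlim.
  unfold continuity_pt, continue_in, limit1_in, limit_in; simpl; unfold R_dist.
  intros eps He. destruct (pm_cont psi (Rabs z) Hc (Rabs_pos z) eps He) as [d [Hd H]].
  exists d. split; auto. intros w [_ Hw]. unfold gm. apply H. apply Rabs_pos.
  eapply Rle_lt_trans. apply Rabs_triang_inv2. auto. Qed.

Lemma gm_bounds psi K : (forall r, continuous psi r) -> (forall r, 0 < psi r) -> (forall r, psi r <= K) ->
  forall y, 0 < gm psi y /\ gm psi y <= K.
Proof. intros Hc Hp HK y. unfold gm. destruct (pm_attain psi (Rabs y) Hc (Rabs_pos y)) as [[r [_ E]] _].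
  rewrite E. auto. Qed.

Lemma Phi_deriv psi : (forall r, continuous psi r) -> forall y, is_derive (Phi psi) y (gm psi y).
Proof. intros Hc y. apply (is_derive_RInt (gm psi) (Phi psi) 0 y).
  exists (mkposreal 1 Rlt_0_1). intros b _. unfold Phi. apply (RInt_correct (V:=R_CompleteNormedModule)).
  apply (ex_RInt_continuous (V:=R_CompleteNormedModule)). intros; apply gm_cont; auto.
  apply gm_cont; auto. Qed.

Lemma Phi_0 psi : Phi psi 0 = 0.
Proof. unfold Phi. apply (RInt_point (V:=R_CompleteNormedModule)). Qed.

Lemma Phi_lip psi K : (forall r, continuous psi r) -> (forall r, 0 < psi r) -> (forall r, psi r <= K) ->
  forall a b, a <= b -> 0 <= Phi psi b - Phi psi a <= K * (b - a).
Proof. intros Hc Hp HK a b Hab. destruct (Req_dec a b). subst. rewrite Rminus_diag. lra.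
  destruct (MVT_gen (Phi psi) a b (gm psi)) as [c [_ Hc2]].
  intros; apply Phi_deriv; auto.
  intros. apply continuity_pt_filterlim. apply (ex_derive_continuous (K:=R_AbsRing) (V:=R_NormedModule)).
  eexists. apply Phi_deriv; auto.
  rewrite Hc2. destruct (gm_bounds psi K Hc Hp HK c). split; nra. Qed.

Lemma Phi_nonneg psi K : (forall r, continuous psi r) -> (forall r, 0 < psi r) -> (forall r, psi r <= K) ->
  forall y, 0 <= y -> 0 <= Phi psi y.
Proof. intros. destruct (Phi_lip psi K H H0 H1 0 y H2). rewrite Phi_0 in H3. lra. Qed.

Lemma Phi_RInt psi X : 0 <= X -> RInt (psi_min psi) 0 X = Phi psi X.
Proof. intros HX. unfold Phi. apply RInt_ext. intros x Hx. rewrite Rmin_left in Hx by lra.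
  unfold gm. rewrite Rabs_right by lra. reflexivity. Qed.

Lemma cn_Phi psi f : (forall r, continuous psi r) -> cont_nonneg f -> cont_nonneg (fun t => Phi psi (f t)).
Proof. intros Hc Hf. apply cn_comp; auto. intros y. apply (ex_derive_continuous (K:=R_AbsRing) (V:=R_NormedModule)).
  eexists. apply Phi_deriv; auto. Qed.

Definition T3 N d (F : nat -> nat -> nat -> R) := rsum d (fun k => rsum N (fun i => rsum N (fun j => F k i j))).
Lemma T3_le N d F G : (forall k i j, (k < d)%nat -> (i < N)%nat -> (j < N)%nat -> F k i j <= G k i j) -> T3 N d F <= T3 N d G.
Proof. intros H. unfold T3. apply rsum_le; intros k Hk; apply rsum_le; intros i Hi; apply rsum_le; intros j Hj; auto. Qed.
Lemma T3_plus N d F G : T3 N d (fun k i j => F k i j + G k i j) = T3 N d F + T3 N d G.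
Proof. unfold T3. rewrite <- rsum_plus. apply rsum_ext; intros. rewrite <- rsum_plus. apply rsum_ext; intros.
  apply rsum_plus. Qed.
Lemma T3_scal N d c F : T3 N d (fun k i j => c * F k i j) = c * T3 N d F.
Proof. unfold T3. rewrite <- rsum_scal. apply rsum_ext; intros. rewrite <- rsum_scal. apply rsum_ext; intros.
  apply rsum_scal. Qed.
Lemma T3_nonneg N d F : (forall k i j, (k < d)%nat -> (i < N)%nat -> (j < N)%nat -> 0 <= F k i j) -> 0 <= T3 N d F.
Proof. intros H. unfold T3. apply rsum_nonneg; intros; apply rsum_nonneg; intros; apply rsum_nonneg; intros; apply H; auto. Qed.

Definition PP N d (y : nat -> nat -> R -> R) t := T3 N d (fun k i j => (y i k t - y j k t)^2).

Lemma PP_nonneg N d y t : 0 <= PP N d y t.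
Proof. apply T3_nonneg. intros. apply pow2_ge_0. Qed.

Lemma edist_le N d y t i j : (i < N)%nat -> (j < N)%nat -> edist d (y i) (y j) t <= sqrt (PP N d y t).
Proof. intros Hi Hj. unfold edist. apply sqrt_le_1_alt. unfold PP, T3. apply rsum_le. intros k Hk.
  eapply Rle_trans; [| apply (rsum_single N _ i); auto].
  apply (rsum_single N (fun j0 => (y i k t - y j0 k t)^2) j); auto. intros; apply pow2_ge_0.
  intros. apply rsum_nonneg. intros; apply pow2_ge_0. Qed.

Lemma dX_le N d y t : dX N d y t <= sqrt (PP N d y t).
Proof. unfold dX. apply rmax_le. apply sqrt_pos. intros i Hi. apply rmax_le. apply sqrt_pos.
  intros j Hj. apply edist_le; auto. Qed.

Lemma edist_nonneg d y z t : 0 <= edist d y z t.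
Proof. apply sqrt_pos. Qed.

Lemma edist_sym d y z t : edist d y z t = edist d z y t.
Proof. unfold edist. f_equal. apply rsum_ext. intros; ring. Qed.

Lemma rsum_opp n f : rsum n (fun m => - f m) = - rsum n f.
Proof. induction n; simpl; [ring|rewrite IHn; ring]. Qed.
Lemma alg N (u u' : nat -> R) (w : nat -> nat -> R) c :
  (forall i j, w i j = w j i) -> (forall i, (i < N)%nat -> u' i = c * rsum N (fun l => w i l * (u l - u i))) ->
  rsum N (fun i => rsum N (fun j => 2 * ((u i - u j) * (u' i - u' j)))) =
  -2 * INR N * c * rsum N (fun i => rsum N (fun j => w i j * (u i - u j)^2)).
Proof. intros Hw Hu.
  set (A := rsum N (fun i => u i * u' i)). set (U := rsum N u). set (U' := rsum N u').
  assert (S1 : rsum N (fun i => rsum N (fun j => 2 * ((u i - u j) * (u' i - u' j)))) = 4 * INR N * A - 4 * U * U').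
  { transitivity (rsum N (fun i => 2 * INR N * (u i * u' i) + (-2 * U') * u i + (-2 * U) * u' i + 2 * A)).
    - apply rsum_ext; intros i Hi.
      transitivity (rsum N (fun j => (2 * (u i * u' i) + (-2 * u i) * u' j) + (-2 * u' i) * u j + 2 * (u j * u' j))).
      apply rsum_ext; intros; ring.
      rewrite !rsum_plus, !rsum_scal, rsum_const. unfold A, U, U'. ring.
    - rewrite !rsum_plus, !rsum_scal, rsum_const. unfold A, U, U'. ring. }
  assert (S2 : U' = 0).
  { unfold U'. transitivity (rsum N (fun i => c * (rsum N (fun l => w i l * u l) - rsum N (fun l => w i l * u i)))).
    apply rsum_ext; intros i Hi. rewrite Hu by auto. f_equal. rewrite <- rsum_minus. apply rsum_ext; intros; ring.
    rewrite rsum_scal, rsum_minus, rsum_exch.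
    replace (rsum N (fun j => rsum N (fun i => w i j * u j))) with (rsum N (fun i => rsum N (fun l => w i l * u i))).
    ring. apply rsum_ext; intros. apply rsum_ext; intros. rewrite Hw; auto. }
  set (B := rsum N (fun i => rsum N (fun l => w i l * (u i * (u l - u i))))).
  assert (S3 : A = c * B).
  { unfold A, B. rewrite <- rsum_scal. apply rsum_ext; intros i Hi. rewrite Hu by auto.
    rewrite <- Rmult_assoc, (Rmult_comm (u i) c), Rmult_assoc. f_equal. rewrite <- rsum_scal. apply rsum_ext; intros; ring. }
  assert (S4 : 2 * B = - rsum N (fun i => rsum N (fun j => w i j * (u i - u j)^2))).
  { assert (B = rsum N (fun i => rsum N (fun l => w i l * (u l * (u i - u l))))).
    { unfold B. rewrite rsum_exch. apply rsum_ext; intros. apply rsum_ext; intros. rewrite Hw. auto. }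
    replace (2 * B) with (B + B) by ring. rewrite H at 2. unfold B. rewrite <- rsum_plus.
    rewrite <- rsum_opp.
    apply rsum_ext; intros. rewrite <- rsum_plus, <- rsum_opp. apply rsum_ext; intros. ring. }
  rewrite S1, S2, S3. replace (rsum N (fun i => rsum N (fun j => w i j * (u i - u j)^2))) with (- (2 * B)) by lra.
  ring. Qed.

Definition W d psi (x : nat -> nat -> R -> R) t i j := if Nat.eqb j i then 0 else psi (edist d (x i) (x j) t).
Definition Sw N d psi x (v : nat -> nat -> R -> R) t := T3 N d (fun k i j => W d psi x t i j * (v i k t - v j k t)^2).
Definition Exd N d (x v : nat -> nat -> R -> R) t := T3 N d (fun k i j => 2 * ((x i k t - x j k t) * (v i k t - v j k t))).

Lemma solDx N d psi ts x v i k n t : is_solution N d psi ts x v -> (i < N)%nat -> (k < d)%nat -> ts n < t < ts (S n) ->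
  is_derive (x i k) t (v i k t).
Proof. intros H Hi Hk Ht. apply (proj2 (proj2 (H i k Hi Hk)) n t Ht). Qed.
Lemma solDv N d psi ts x v i k n t : is_solution N d psi ts x v -> (i < N)%nat -> (k < d)%nat -> ts n < t < ts (S n) ->
  is_derive (v i k) t (/ (INR N - 1) * rsum N (fun j => if Nat.eqb j i then 0 else
                   alpha ts t * psi (edist d (x i) (x j) t) * (v j k t - v i k t))).
Proof. intros H Hi Hk Ht. apply (proj2 (proj2 (H i k Hi Hk)) n t Ht). Qed.
Lemma solCx N d psi ts x v i k : is_solution N d psi ts x v -> (i < N)%nat -> (k < d)%nat -> cont_nonneg (x i k).
Proof. intros H Hi Hk. apply (H i k Hi Hk). Qed.
Lemma solCv N d psi ts x v i k : is_solution N d psi ts x v -> (i < N)%nat -> (k < d)%nat -> cont_nonneg (v i k).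
Proof. intros H Hi Hk. apply (H i k Hi Hk). Qed.

Lemma W_sym d psi x t i j : W d psi x t i j = W d psi x t j i.
Proof. unfold W. rewrite Nat.eqb_sym. destruct (Nat.eqb i j); auto. rewrite edist_sym; auto. Qed.

Lemma PPv_deriv N d psi ts x v n t : is_solution N d psi ts x v -> ts n < t < ts (S n) ->
  is_derive (PP N d v) t (-2 * INR N * (/ (INR N - 1) * alpha ts t) * Sw N d psi x v t).
Proof. intros Hsol Ht.
  set (dv := fun i k => / (INR N - 1) * rsum N (fun j => if Nat.eqb j i then 0 else
                   alpha ts t * psi (edist d (x i) (x j) t) * (v j k t - v i k t))).
  apply D_ext with (T3 N d (fun k i j => 2 * ((v i k t - v j k t) * (dv i k - dv j k)))).
  - unfold PP, T3. apply D_rsum; intros k Hk; apply D_rsum; intros i Hi; apply D_rsum; intros j Hj.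
    apply D_ext with (INR 2 * (dv i k - dv j k) * (v i k t - v j k t) ^ Nat.pred 2).
    apply (is_derive_pow (fun s => v i k s - v j k s)). apply D_minus.
    apply (solDv _ _ _ _ _ _ i k n t Hsol Hi Hk Ht). apply (solDv _ _ _ _ _ _ j k n t Hsol Hj Hk Ht). simpl; ring.
  - unfold T3, Sw, T3. rewrite <- rsum_scal. apply rsum_ext; intros k Hk.
    apply (alg N (fun i => v i k t) (fun i => dv i k) (W d psi x t)).
    intros; apply W_sym.
    intros i Hi. unfold dv. rewrite Rmult_assoc. f_equal. rewrite <- rsum_scal. apply rsum_ext; intros l _.
    unfold W. destruct (Nat.eqb l i); ring. Qed.

Lemma PPx_deriv N d psi ts x v n t : is_solution N d psi ts x v -> ts n < t < ts (S n) ->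
  is_derive (PP N d x) t (Exd N d x v t).
Proof. intros Hsol Ht. unfold PP, Exd, T3. apply D_rsum; intros k Hk; apply D_rsum; intros i Hi; apply D_rsum; intros j Hj.
    apply D_ext with (INR 2 * (v i k t - v j k t) * (x i k t - x j k t) ^ Nat.pred 2).
    apply (is_derive_pow (fun s => x i k s - x j k s)). apply D_minus.
    apply (solDx _ _ _ _ _ _ i k n t Hsol Hi Hk Ht). apply (solDx _ _ _ _ _ _ j k n t Hsol Hj Hk Ht). simpl; ring. Qed.

Lemma cn_PP N d (y : nat -> nat -> R -> R) : (forall i k, (i < N)%nat -> (k < d)%nat -> cont_nonneg (y i k)) ->
  cont_nonneg (PP N d y).
Proof. intros H. unfold PP, T3. apply cn_rsum; intros k Hk; apply cn_rsum; intros i Hi; apply cn_rsum; intros j Hj.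
  apply cn_ext with (fun t => (y i k t - y j k t) * (y i k t - y j k t)). apply cn_mult; apply cn_minus; auto.
  intros; ring. Qed.

Lemma Sw_upper N d psi K x v t : 0 <= K -> (forall r, 0 < psi r) -> (forall r, psi r <= K) ->
  0 <= Sw N d psi x v t <= K * PP N d v t.
Proof. intros HK Hp Hle. split.
  - apply T3_nonneg. intros. unfold W. destruct (Nat.eqb j i). rewrite Rmult_0_l; lra.
    apply Rmult_le_pos. left; auto. apply pow2_ge_0.
  - unfold PP. rewrite <- T3_scal. apply T3_le. intros. unfold W. destruct (Nat.eqb j i).
    rewrite Rmult_0_l. apply Rmult_le_pos; auto. apply pow2_ge_0.
    apply Rmult_le_compat_r. apply pow2_ge_0. auto. Qed.

Lemma Sw_lower N d psi x v t m : (forall i j, (i < N)%nat -> (j < N)%nat -> i <> j -> m <= psi (edist d (x i) (x j) t)) ->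
  m * PP N d v t <= Sw N d psi x v t.
Proof. intros H. unfold PP. rewrite <- T3_scal. apply T3_le. intros k i j Hk Hi Hj. unfold W.
  destruct (Nat.eqb j i) eqn:E. apply Nat.eqb_eq in E. subst. replace (v i k t - v i k t) with 0 by ring. lra.
  apply Nat.eqb_neq in E. apply Rmult_le_compat_r. apply pow2_ge_0. apply H; auto. Qed.

Lemma amgm l a b : 0 < l -> 2 * (a * b) <= l * a^2 + / l * b^2.
Proof. intros Hl. assert (0 <= (l * a - b)^2 / l). apply Rdiv_le_0_compat; auto. apply pow2_ge_0.
  replace ((l * a - b)^2 / l) with (l * a^2 + / l * b^2 - 2 * (a * b)) in H by (field; lra). lra. Qed.

Lemma Exd_bound N d x v t l : 0 < l -> Exd N d x v t <= l * PP N d x t + / l * PP N d v t.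
Proof. intros Hl. unfold Exd, PP. rewrite <- !T3_scal, <- T3_plus. apply T3_le. intros. apply amgm; auto. Qed.

Lemma Xe_lemma Q E eps D : 0 <= Q -> 0 <= E -> 0 < eps -> (forall l, 0 < l -> D <= l * Q + / l * E) ->
  D / (2 * sqrt (Q + eps)) <= sqrt E.
Proof. intros HQ HE He HD.
  assert (HX : 0 < sqrt (Q + eps)) by (apply sqrt_lt_R0; lra).
  assert (HX2 : sqrt (Q + eps) * sqrt (Q + eps) = Q + eps) by (apply sqrt_sqrt; lra).
  set (X := sqrt (Q + eps)) in *.
  destruct (Req_dec E 0) as [E0|E0].
  - subst. rewrite sqrt_0. assert (D <= 0).
    { destruct (Rle_or_lt D 0); auto. assert (A := HD (D / (2 * (Q + 1))) ltac:(apply Rdiv_lt_0_compat; lra)).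
      rewrite Rmult_0_r, Rplus_0_r in A.
      assert (D / (2 * (Q + 1)) * Q < D). { apply Rmult_lt_reg_r with (2 * (Q+1)). lra.
        replace (D / (2 * (Q + 1)) * Q * (2 * (Q + 1))) with (D * Q) by (field; lra). nra. }
      lra. }
    apply Rmult_le_reg_r with (2 * X). lra. unfold Rdiv. rewrite Rmult_assoc, Rinv_l by lra. lra.
  - assert (Hs : 0 < sqrt E) by (apply sqrt_lt_R0; lra).
    assert (Hs2 : sqrt E * sqrt E = E) by (apply sqrt_sqrt; lra).
    set (s := sqrt E) in *.
    assert (A := HD (s / X) ltac:(apply Rdiv_lt_0_compat; lra)).
    replace (/ (s / X) * E) with (s * X) in A by (rewrite <- Hs2; field; lra).
    assert (s / X * Q <= s * X). { apply Rmult_le_reg_r with X. lra.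
      replace (s / X * Q * X) with (s * Q) by (field; lra). nra. }
    apply Rmult_le_reg_r with (2 * X). lra. unfold Rdiv. rewrite Rmult_assoc, Rinv_l by lra. lra. Qed.

Definition HH N d (psi : R -> R) K ts x v : Prop := (2 <= N)%nat /\ (forall r, 0 < psi r) /\ (forall r, continuous psi r) /\
  (forall r, psi r <= K) /\ 0 < K /\ ts O = 0 /\ (forall n, ts n < ts (S n)) /\ is_solution N d psi ts x v.

Lemma ts_lt ts : (forall n, ts n < ts (S n)) -> forall m n, (m < n)%nat -> ts m < ts n.
Proof. intros H m n Hmn. induction Hmn. apply H. specialize (H m0). lra. Qed.
Lemma ts_le ts : (forall n, ts n < ts (S n)) -> forall m n, (m <= n)%nat -> ts m <= ts n.
Proof. intros H m n Hmn. destruct (Nat.eq_dec m n). subst; lra. left; apply ts_lt; auto; lia. Qed.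

Lemma alpha_pos ts p t : (forall n, ts n < ts (S n)) -> ts (2 * p)%nat < t < ts (2 * p + 1)%nat -> alpha ts t = 1.
Proof. intros H Ht. unfold alpha. destruct excluded_middle_informative as [[m Hm]|]; auto. exfalso.
  destruct (le_lt_dec p m).
  - assert (ts (2 * p + 1)%nat <= ts (2 * m + 1)%nat) by (apply ts_le; auto; lia). lra.
  - assert (ts (2 * m + 2)%nat <= ts (2 * p)%nat) by (apply ts_le; auto; lia). lra. Qed.

Lemma alpha_neg ts p t : (forall n, ts n < ts (S n)) -> ts (2 * p + 1)%nat < t < ts (2 * p + 2)%nat -> alpha ts t = -1.
Proof. intros H Ht. unfold alpha. destruct excluded_middle_informative as [|NE]; auto. exfalso. apply NE.
  exists p. lra. Qed.

Lemma coefN N : (2 <= N)%nat -> 1 <= INR N / (INR N - 1) <= 2.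
Proof. intros H. apply le_INR in H. simpl in H. split.
  apply Rmult_le_reg_r with (INR N - 1). lra. unfold Rdiv. rewrite Rmult_assoc, Rinv_l by lra. lra.
  apply Rmult_le_reg_r with (INR N - 1). lra. unfold Rdiv. rewrite Rmult_assoc, Rinv_l by lra. lra. Qed.

Definition HH_psi (psi : R -> R) K : Prop := (forall r, 0 < psi r) /\ (forall r, continuous psi r) /\ (forall r, psi r <= K).
Lemma HH_HHpsi N d psi K ts x v : HH N d psi K ts x v -> HH_psi psi K.
Proof. intros [_ [A [B [C _]]]]. split; auto. Qed.
Definition Ev N d (v : nat -> nat -> R -> R) t := PP N d v t.

Lemma growth N d psi K ts x v n C (H : HH N d psi K ts x v) :
  (forall s, ts n < s < ts (S n) -> -2 * INR N * (/ (INR N - 1) * alpha ts s) * Sw N d psi x v s <= C * PP N d v s) ->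
  forall t, ts n <= t <= ts (S n) -> PP N d v t * exp (- C * t) <= PP N d v (ts n) * exp (- C * ts n).
Proof. destruct H as [HN [Hp [Hc [HK [Kp [H0 [Hinc Hsol]]]]]]]. intros HC t Ht.
  assert (0 <= ts n) by (rewrite <- H0; apply ts_le; auto; lia).
  apply (ML2 (fun s => PP N d v s * exp (- C * s))
    (fun s => (-2 * INR N * (/ (INR N - 1) * alpha ts s) * Sw N d psi x v s) * exp (-C * s) + PP N d v s * (-C * 1 * exp (-C * s))) (ts n) (ts (S n))); auto; try lra.
  - apply cn_mult. apply cn_PP. intros; eapply solCv; eauto.
    apply cn_comp. apply cn_scal. apply cn_id. intros y. apply (ex_derive_continuous (K:=R_AbsRing) (V:=R_NormedModule)). eexists. apply is_derive_exp.
  - intros s Hs. apply (D_mult (PP N d v) (fun s => exp (- C * s))). eapply PPv_deriv; eauto.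
    apply (D_comp exp (fun s => - C * s) s (exp (- C * s)) (- C * 1)). apply (is_derive_exp (- C * s)). apply is_derive_scal. apply D_id.
  - intros s Hs. specialize (HC s Hs). assert (0 < exp (-C * s)) by apply exp_pos. nra. Qed.

Lemma sqrt_add_le a b : 0 <= a -> 0 <= b -> sqrt (a + b) <= sqrt a + sqrt b.
Proof. intros Ha Hb. apply Rsqr_incr_0_var. rewrite Rsqr_sqrt by lra. unfold Rsqr.
  assert (0 <= sqrt a * sqrt b) by (apply Rmult_le_pos; apply sqrt_pos).
  replace ((sqrt a + sqrt b) * (sqrt a + sqrt b)) with (sqrt a * sqrt a + sqrt b * sqrt b + 2 * (sqrt a * sqrt b)) by ring.
  rewrite !sqrt_sqrt by lra. lra. generalize (sqrt_pos a) (sqrt_pos b); lra. Qed.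

Lemma eps_lim A B C : 0 <= C -> (forall e, 0 < e -> A <= B + e * C) -> A <= B.
Proof. intros HC H. destruct (Rle_or_lt A B); auto. exfalso.
  set (e := (A - B) / (2 * (C + 1))). assert (0 < e) by (unfold e; apply Rdiv_lt_0_compat; lra).
  specialize (H e H1). assert (e * C < A - B). { unfold e.
  apply Rle_lt_trans with ((A - B) / 2). apply Rmult_le_reg_r with (2 * (C+1)). lra.
  replace ((A - B) / (2 * (C + 1)) * C * (2 * (C + 1))) with ((A - B) * C) by (field; lra).
  replace ((A - B) / 2 * (2 * (C + 1))) with ((A - B) * (C + 1)) by (field; lra). nra. lra. } lra. Qed.

Definition Lf N d psi (x v : nat -> nat -> R -> R) t := sqrt (PP N d v t) + Phi psi (sqrt (PP N d x t)).

Lemma sqrt_pos_eps E e : 0 <= E -> 0 < e -> 0 < sqrt (E + e).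
Proof. intros. apply sqrt_lt_R0. lra. Qed.

Lemma D_Ve N d psi ts x v n s e : is_solution N d psi ts x v -> 0 < e -> ts n < s < ts (S n) ->
  is_derive (fun t => sqrt (PP N d v t + e)) s
    ((-2 * INR N * (/ (INR N - 1) * alpha ts s) * Sw N d psi x v s) / (2 * sqrt (PP N d v s + e))).
Proof. intros Hsol He Hs. apply (is_derive_sqrt (fun t => PP N d v t + e)).
  apply D_ext with (-2 * INR N * (/ (INR N - 1) * alpha ts s) * Sw N d psi x v s + 0).
  apply D_plus. eapply PPv_deriv; eauto. apply D_const. ring. generalize (PP_nonneg N d v s); lra. Qed.

Lemma D_Xe N d psi ts x v n s e : is_solution N d psi ts x v -> 0 < e -> ts n < s < ts (S n) ->
  is_derive (fun t => sqrt (PP N d x t + e)) s (Exd N d x v s / (2 * sqrt (PP N d x s + e))).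
Proof. intros Hsol He Hs. apply (is_derive_sqrt (fun t => PP N d x t + e)).
  apply D_ext with (Exd N d x v s + 0).
  apply D_plus. eapply PPx_deriv; eauto. apply D_const. ring. generalize (PP_nonneg N d x s); lra. Qed.

Lemma Xe_bound N d x v s e : 0 < e -> Exd N d x v s / (2 * sqrt (PP N d x s + e)) <= sqrt (PP N d v s).
Proof. intros He. apply Xe_lemma; auto using PP_nonneg. intros. apply Exd_bound; auto. Qed.

Lemma cn_sqrt f : cont_nonneg f -> cont_nonneg (fun t => sqrt (f t)).
Proof. intros. apply cn_comp; auto. intros y. apply continuous_sqrt. Qed.

Lemma Phi_le psi K a b : HH_psi psi K -> a <= b -> Phi psi a <= Phi psi b.
Proof. intros [Hp [Hc HK]] Hab. destruct (Phi_lip psi K Hc Hp HK a b Hab). lra. Qed.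

Lemma sqrt_ee e : 0 <= e -> sqrt (e * e) = e.
Proof. intros. apply sqrt_square; auto. Qed.

Lemma LPos N d psi K ts x v p (H : HH N d psi K ts x v) :
  forall t, ts (2 * p)%nat <= t <= ts (2 * p + 1)%nat -> Lf N d psi x v t <= Lf N d psi x v (ts (2 * p)%nat).
Proof. intros t Ht. assert (Hpsi := HH_HHpsi _ _ _ _ _ _ _ H).
  destruct H as [HN [Hp [Hc [HK [Kp [H0 [Hinc Hsol]]]]]]].
  set (a := ts (2 * p)%nat) in *.
  assert (Ha : 0 <= a) by (unfold a; rewrite <- H0; apply ts_le; auto; lia).
  replace (2 * p + 1)%nat with (S (2 * p)) in Ht by lia.
  assert (HN' := coefN N HN).
  apply (eps_lim _ _ (1 + K + K * (t - a))). nra.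
  intros e He. set (eps := e * e). assert (Heps : 0 < eps) by (unfold eps; nra).
  assert (A : sqrt (PP N d v t + eps) + Phi psi (sqrt (PP N d x t + eps)) - K * e * t <=
              sqrt (PP N d v a + eps) + Phi psi (sqrt (PP N d x a + eps)) - K * e * a).
  { apply (ML2 (fun s => sqrt (PP N d v s + eps) + Phi psi (sqrt (PP N d x s + eps)) - K * e * s)
      (fun s => (-2 * INR N * (/ (INR N - 1) * alpha ts s) * Sw N d psi x v s) / (2 * sqrt (PP N d v s + eps))
         + Exd N d x v s / (2 * sqrt (PP N d x s + eps)) * gm psi (sqrt (PP N d x s + eps)) - K * e * 1)
      a (ts (S (2 * p))) t); auto; try lra.
    - apply cn_minus. apply cn_plus. apply cn_sqrt. apply cn_plus. apply cn_PP. intros; eapply solCv; eauto. apply cn_const.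
      apply cn_Phi; auto. apply cn_sqrt. apply cn_plus. apply cn_PP. intros; eapply solCx; eauto. apply cn_const.
      apply cn_scal. apply cn_id.
    - intros s Hs. apply D_minus. apply D_plus. eapply D_Ve; eauto.
      apply (D_comp (Phi psi) (fun s => sqrt (PP N d x s + eps))). apply Phi_deriv; auto. eapply D_Xe; eauto.
      apply is_derive_scal. apply D_id.
    - intros s Hs. rewrite (alpha_pos ts p s Hinc) by (replace (2 * p + 1)%nat with (S (2 * p)) by lia; auto).
      assert (Hs0 : 0 <= s) by lra.
      set (E := PP N d v s). set (V := sqrt E). set (Ve := sqrt (E + eps)).
      set (Xe := sqrt (PP N d x s + eps)).
      assert (HE : 0 <= E) by apply PP_nonneg.
      assert (HV : V * V = E) by (apply sqrt_sqrt; auto).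
      assert (HV0 : 0 <= V) by apply sqrt_pos.
      assert (HVe : Ve * Ve = E + eps) by (apply sqrt_sqrt; lra).
      assert (HVe0 : 0 < Ve) by (apply sqrt_lt_R0; lra).
      assert (HVVe : V <= Ve) by (apply sqrt_le_1_alt; lra).
      assert (HVe2 : Ve <= V + e) by (unfold Ve, V; rewrite <- (sqrt_ee e) by lra; apply sqrt_add_le; unfold eps; nra).
      assert (HXe : 0 < Xe) by (apply sqrt_lt_R0; generalize (PP_nonneg N d x s); lra).
      set (gg := gm psi Xe).
      assert (Hgg : 0 < gg <= K) by (apply gm_bounds; auto).
      assert (Hggm : forall i j, (i < N)%nat -> (j < N)%nat -> i <> j -> gg <= psi (edist d (x i) (x j) s)).
      { intros i j Hi Hj Hij. unfold gg, gm. rewrite Rabs_right by lra.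
        apply (pm_attain psi Xe Hc ltac:(lra)). split. apply edist_nonneg.
        eapply Rle_trans. apply (edist_le N d x s i j Hi Hj). apply sqrt_le_1_alt. lra. }
      assert (HSw := Sw_lower N d psi x v s gg Hggm). fold E in HSw.
      assert (HSw0 := Sw_upper N d psi K x v s ltac:(lra) Hp HK).
      set (Sws := Sw N d psi x v s) in *.
      assert (HEvd : -2 * INR N * (/ (INR N - 1) * 1) * Sws <= -2 * gg * E).
      { replace (-2 * INR N * (/ (INR N - 1) * 1) * Sws) with (-2 * (INR N / (INR N - 1)) * Sws) by (unfold Rdiv; ring).
        nra. }
      set (Evd := -2 * INR N * (/ (INR N - 1) * 1) * Sws) in *.
      assert (A1 : Evd / (2 * Ve) <= - gg * (E / Ve)).
      { replace (- gg * (E / Ve)) with ((-2 * gg * E) / (2 * Ve)) by (field; lra).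
        unfold Rdiv. apply Rmult_le_compat_r; auto. left; apply Rinv_0_lt_compat; lra. }
      assert (A2 : V - e <= E / Ve).
      { assert ((V - e) * Ve <= E) by nra.
        apply Rmult_le_reg_r with Ve. lra. unfold Rdiv. rewrite Rmult_assoc, Rinv_l by lra. lra. }
      assert (A3 : Exd N d x v s / (2 * Xe) <= V) by (apply Xe_bound; auto).
      set (dX' := Exd N d x v s / (2 * Xe)) in *.
      nra. }
  assert (B1 : sqrt (PP N d v t) <= sqrt (PP N d v t + eps)) by (apply sqrt_le_1_alt; lra).
  assert (B2 : Phi psi (sqrt (PP N d x t)) <= Phi psi (sqrt (PP N d x t + eps))).
  { apply (Phi_le psi K); auto. apply sqrt_le_1_alt; lra. }
  assert (C1 : sqrt (PP N d v a + eps) <= sqrt (PP N d v a) + e).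
  { rewrite <- (sqrt_ee e) by lra. apply sqrt_add_le. apply PP_nonneg. unfold eps; nra. }
  assert (C2 : sqrt (PP N d x a + eps) <= sqrt (PP N d x a) + e).
  { rewrite <- (sqrt_ee e) by lra. apply sqrt_add_le. apply PP_nonneg. unfold eps; nra. }
  assert (C3 : Phi psi (sqrt (PP N d x a + eps)) <= Phi psi (sqrt (PP N d x a)) + K * e).
  { destruct Hpsi as [Hp' [Hc' HK']].
    assert (L1 := Phi_lip psi K Hc' Hp' HK' (sqrt (PP N d x a)) (sqrt (PP N d x a + eps)) ltac:(apply sqrt_le_1_alt; lra)).
    nra. }
  unfold Lf. nra. Qed.

Lemma EvPos N d psi K ts x v p m (H : HH N d psi K ts x v) :
  (forall s, ts (2 * p)%nat < s < ts (2 * p + 1)%nat -> forall i j, (i < N)%nat -> (j < N)%nat -> i <> j -> m <= psi (edist d (x i) (x j) s)) ->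
  forall t, ts (2 * p)%nat <= t <= ts (2 * p + 1)%nat -> PP N d v t <= PP N d v (ts (2 * p)%nat) * exp (- 2 * m * (t - ts (2 * p)%nat)).
Proof. intros Hm t Ht. assert (H' := H). destruct H' as [HN [Hp [Hc [HK [Kp [H0 [Hinc Hsol]]]]]]].
  assert (HN' := coefN N HN).
  replace (2 * p + 1)%nat with (S (2 * p)) in * by lia.
  assert (G := growth N d psi K ts x v (2 * p) (- 2 * m) H).
  assert (G' : PP N d v t * exp (- (-2 * m) * t) <= PP N d v (ts (2 * p)%nat) * exp (- (-2 * m) * ts (2 * p)%nat)).
  { apply G; auto. intros s Hs. rewrite (alpha_pos ts p s Hinc) by (replace (2 * p + 1)%nat with (S (2 * p)) by lia; auto).
    assert (HSw := Sw_lower N d psi x v s m (Hm s Hs)).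
    assert (HSw0 := Sw_upper N d psi K x v s ltac:(lra) Hp HK).
    replace (-2 * INR N * (/ (INR N - 1) * 1) * Sw N d psi x v s) with (-2 * (INR N / (INR N - 1)) * Sw N d psi x v s) by (unfold Rdiv; ring).
    nra. }
  set (a := ts (2 * p)%nat) in *.
  assert (E1 : PP N d v t = PP N d v t * exp (- (-2 * m) * t) * exp (-2 * m * t)).
  { rewrite Rmult_assoc, <- exp_plus. replace (- (-2 * m) * t + -2 * m * t) with 0 by ring. rewrite exp_0. ring. }
  rewrite E1. replace (exp (-2 * m * (t - a))) with (exp (- (-2 * m) * a) * exp (-2 * m * t)).
  rewrite <- Rmult_assoc. apply Rmult_le_compat_r. left; apply exp_pos. auto.
  rewrite <- exp_plus. f_equal. ring. Qed.

Lemma EvNeg N d psi K ts x v p (H : HH N d psi K ts x v) :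
  forall t, ts (2 * p + 1)%nat <= t <= ts (2 * p + 2)%nat -> PP N d v t <= PP N d v (ts (2 * p + 1)%nat) * exp (4 * K * (t - ts (2 * p + 1)%nat)).
Proof. intros t Ht. assert (H' := H). destruct H' as [HN [Hp [Hc [HK [Kp [H0 [Hinc Hsol]]]]]]].
  assert (HN' := coefN N HN).
  replace (2 * p + 2)%nat with (S (2 * p + 1)) in * by lia.
  assert (G := growth N d psi K ts x v (2 * p + 1) (4 * K) H).
  assert (G' : PP N d v t * exp (- (4 * K) * t) <= PP N d v (ts (2 * p + 1)%nat) * exp (- (4 * K) * ts (2 * p + 1)%nat)).
  { apply G; auto. intros s Hs. rewrite (alpha_neg ts p s Hinc) by (replace (2 * p + 2)%nat with (S (2 * p + 1)) by lia; auto).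
    assert (HSw0 := Sw_upper N d psi K x v s ltac:(lra) Hp HK).
    replace (-2 * INR N * (/ (INR N - 1) * -1) * Sw N d psi x v s) with (2 * (INR N / (INR N - 1)) * Sw N d psi x v s) by (unfold Rdiv; ring).
    nra. }
  set (a := ts (2 * p + 1)%nat) in *.
  assert (E1 : PP N d v t = PP N d v t * exp (- (4 * K) * t) * exp (4 * K * t)).
  { rewrite Rmult_assoc, <- exp_plus. replace (- (4 * K) * t + 4 * K * t) with 0 by ring. rewrite exp_0. ring. }
  rewrite E1. replace (exp (4 * K * (t - a))) with (exp (- (4 * K) * a) * exp (4 * K * t)).
  rewrite <- Rmult_assoc. apply Rmult_le_compat_r. left; apply exp_pos. auto.
  rewrite <- exp_plus. f_equal. ring. Qed.

Lemma exp_le y z : y <= z -> exp y <= exp z.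
Proof. intros [H|H]. left; apply exp_increasing; auto. subst; lra. Qed.
Lemma exp_lin y : 0 <= y -> exp y <= 1 + y * exp y.
Proof. intros Hy. assert (A := exp_ineq1_le (- y)).
  assert (B : exp y * exp (- y) = 1) by (rewrite <- exp_plus; replace (y + - y) with 0 by ring; apply exp_0).
  assert (0 < exp y) by apply exp_pos. nra. Qed.

Lemma exp_2ln2 : exp (2 * ln 2) = 4.
Proof. replace (2 * ln 2) with (ln 2 + ln 2) by ring. rewrite exp_plus, exp_ln by lra. ring. Qed.

Lemma Lf_nonneg N d psi K x v t : HH_psi psi K -> 0 <= Lf N d psi x v t.
Proof. intros [Hp [Hc HK]]. unfold Lf. assert (0 <= Phi psi (sqrt (PP N d x t))) by (apply (Phi_nonneg psi K); auto; apply sqrt_pos).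
  generalize (sqrt_pos (PP N d v t)); lra. Qed.

Lemma LNeg N d psi K ts x v p (H : HH N d psi K ts x v) :
  ts (2 * p + 2)%nat - ts (2 * p + 1)%nat < ln 2 / K ->
  forall t, ts (2 * p + 1)%nat <= t <= ts (2 * p + 2)%nat ->
  Lf N d psi x v t <= Lf N d psi x v (ts (2 * p + 1)%nat) * exp (12 * (K * (ts (2 * p + 2)%nat - ts (2 * p + 1)%nat))).
Proof. intros Hng t Ht. assert (Hpsi := HH_HHpsi _ _ _ _ _ _ _ H). assert (EN := EvNeg N d psi K ts x v p H).
  assert (H' := H). destruct H' as [HN [Hp [Hc [HK [Kp [H0 [Hinc Hsol]]]]]]].
  set (a := ts (2 * p + 1)%nat) in *. set (b := ts (2 * p + 2)%nat) in *.
  assert (Ha : 0 <= a) by (unfold a; rewrite <- H0; apply ts_le; auto; lia).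
  assert (Hab : a < b) by (unfold a, b; apply ts_lt; auto; lia).
  assert (Kab : K * (b - a) < ln 2). { apply Rmult_lt_reg_r with (/ K). apply Rinv_0_lt_compat; lra.
    replace (K * (b - a) * / K) with (b - a) by (field; lra). auto. }
  set (Va := sqrt (PP N d v a)).
  assert (HVa : 0 <= Va) by apply sqrt_pos.
  assert (Vs : forall s, a <= s <= b -> sqrt (PP N d v s) <= Va * exp (2 * K * (s - a))).
  { intros s Hs. eapply Rle_trans. apply sqrt_le_1_alt. apply (EN s Hs).
    rewrite sqrt_mult by (apply PP_nonneg || (left; apply exp_pos)).
    replace (exp (4 * K * (s - a))) with (exp (2 * K * (s - a)) * exp (2 * K * (s - a))) by (rewrite <- exp_plus; f_equal; ring).
    rewrite sqrt_square by (left; apply exp_pos). unfold Va; lra. }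
  assert (E4 : forall s, a <= s <= b -> exp (2 * K * (s - a)) <= 4).
  { intros s Hs. rewrite <- exp_2ln2. left. apply exp_increasing. nra. }
  assert (Vs4 : forall s, a <= s <= b -> sqrt (PP N d v s) <= 4 * Va).
  { intros s Hs. eapply Rle_trans. apply Vs; auto. rewrite Rmult_comm. apply Rmult_le_compat_r; auto. }
  assert (HX : sqrt (PP N d x t) <= sqrt (PP N d x a) + 4 * Va * (t - a)).
  { apply (eps_lim _ _ 1). lra. intros e He. set (eps := e * e). assert (Heps : 0 < eps) by (unfold eps; nra).
    assert (A : sqrt (PP N d x t + eps) - 4 * Va * t <= sqrt (PP N d x a + eps) - 4 * Va * a).
    { apply (ML2 (fun s => sqrt (PP N d x s + eps) - 4 * Va * s)
        (fun s => Exd N d x v s / (2 * sqrt (PP N d x s + eps)) - 4 * Va * 1) a b t); auto; try lra.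
      - apply cn_minus. apply cn_sqrt. apply cn_plus. apply cn_PP. intros; eapply solCx; eauto. apply cn_const.
        apply cn_scal. apply cn_id.
      - intros s Hs. apply D_minus. apply (D_Xe N d psi ts x v (2 * p + 1) s eps Hsol Heps).
        replace (S (2 * p + 1)) with (2 * p + 2)%nat by lia. auto.
        apply is_derive_scal. apply D_id.
      - intros s Hs. assert (A3 := Xe_bound N d x v s eps Heps). assert (A4 := Vs4 s ltac:(lra)). lra. }
    assert (B1 : sqrt (PP N d x t) <= sqrt (PP N d x t + eps)) by (apply sqrt_le_1_alt; lra).
    assert (C1 : sqrt (PP N d x a + eps) <= sqrt (PP N d x a) + e).
    { rewrite <- (sqrt_ee e) by lra. apply sqrt_add_le. apply PP_nonneg. unfold eps; nra. }
    lra. }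
  assert (HPhi : Phi psi (sqrt (PP N d x t)) <= Phi psi (sqrt (PP N d x a)) + K * (4 * Va * (t - a))).
  { destruct Hpsi as [Hp' [Hc' HK']].
    assert (L1 := Phi_lip psi K Hc' Hp' HK' (sqrt (PP N d x a)) (sqrt (PP N d x a) + 4 * Va * (t - a)) ltac:(nra)).
    assert (L2 := Phi_le psi K (sqrt (PP N d x t)) (sqrt (PP N d x a) + 4 * Va * (t - a)) (conj Hp' (conj Hc' HK')) HX).
    lra. }
  assert (HV : sqrt (PP N d v t) <= Va * (1 + 8 * (K * (t - a)))).
  { eapply Rle_trans. apply Vs; lra. apply Rmult_le_compat_l; auto.
    assert (L := exp_lin (2 * K * (t - a)) ltac:(nra)). assert (L2 := E4 t ltac:(lra)).
    assert (2*K*(t-a) * exp(2*K*(t-a)) <= 2*K*(t-a) * 4) by (apply Rmult_le_compat_l; nra). lra. }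
  assert (HPa : 0 <= Phi psi (sqrt (PP N d x a))) by (destruct Hpsi as [Hp' [Hc' HK']]; apply (Phi_nonneg psi K); auto; apply sqrt_pos).
  assert (HL : Lf N d psi x v t <= Lf N d psi x v a * (1 + 12 * (K * (b - a)))).
  { unfold Lf. fold Va. assert (K*(t-a) <= K*(b-a)) by nra.
    assert (Va * (K*(t-a)) <= Va*(K*(b-a))) by (apply Rmult_le_compat_l; lra).
    assert (0 <= Phi psi (sqrt (PP N d x a)) * (K*(b-a))) by (apply Rmult_le_pos; nra).
    lra. }
  eapply Rle_trans. apply HL. apply Rmult_le_compat_l. apply (Lf_nonneg N d psi K x v a Hpsi).
  apply exp_ineq1_le. Qed.

Lemma series_bound a : ex_series a -> (forall n, 0 <= a n) -> forall n, rsum n a <= Series a.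
Proof. intros Hs Hp n.
  assert (L : is_lim_seq (sum_n a) (Series a)) by apply (Series_correct a Hs).
  assert (I : forall m, sum_n a m <= Series a).
  { apply is_lim_seq_incr_compare; auto. intros m. rewrite sum_Sn. unfold plus; simpl. specialize (Hp (S m)). lra. }
  assert (E : forall m, rsum (S m) a = sum_n a m).
  { induction m. simpl. rewrite sum_O. ring. rewrite sum_Sn. unfold plus; simpl. simpl in IHm. rewrite <- IHm. simpl. ring. }
  destruct n. simpl. specialize (I O). rewrite sum_O in I. specialize (Hp O). lra.
  rewrite E. auto. Qed.

Lemma term_ge s : 0 < s -> s < ln 2 -> s <= ln (exp s / (2 - exp s)).
Proof. intros H1 H2. assert (E1 : 1 < exp s) by (rewrite <- exp_0; apply exp_increasing; auto).
  assert (E2 : exp s < 2) by (rewrite <- (exp_ln 2) by lra; apply exp_increasing; auto).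
  rewrite <- (ln_exp s) at 1. destruct (Req_dec (exp s) (exp s / (2 - exp s))) as [E|E].
  rewrite <- E. lra. left. apply ln_increasing. apply exp_pos.
  assert (exp s <= exp s / (2 - exp s)).
  { apply Rmult_le_reg_r with (2 - exp s). lra. unfold Rdiv. rewrite Rmult_assoc, Rinv_l by lra. nra. }
  lra. Qed.

Lemma cover_aux ts t : (forall n, ts n < ts (S n)) -> forall M, ts O <= t < ts M -> exists n, ts n <= t <= ts (S n).
Proof. intros Hinc M. induction M; intros Ht. lra.
  destruct (Rlt_or_le t (ts M)). apply IHM; lra. exists M. lra. Qed.

Lemma cover ts t : (forall n, ts n < ts (S n)) -> is_lim_seq ts p_infty -> ts O <= t ->
  exists p, ts (2 * p)%nat <= t <= ts (2 * p + 2)%nat.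
Proof. intros Hinc Hinf Ht. apply is_lim_seq_spec in Hinf. destruct (Hinf t) as [M HM].
  destruct (cover_aux ts t Hinc (S M) (conj Ht (HM (S M) ltac:(lia)))) as [n Hn].
  destruct (Nat.Even_or_Odd n) as [[p Hp]|[p Hp]]; subst; exists p.
  - assert (ts (S (2 * p)) <= ts (2 * p + 2)%nat) by (apply ts_le; auto; lia). lra.
  - assert (ts (2 * p)%nat <= ts (2 * p + 1)%nat) by (apply ts_le; auto; lia).
    replace (S (2 * p + 1)) with (2 * p + 2)%nat in Hn by lia. lra. Qed.

Definition Tn K (ts : nat -> R) n := rsum n (fun p => K * (ts (2 * p + 2)%nat - ts (2 * p + 1)%nat)).

Lemma Tn_S K ts n : Tn K ts (S n) = Tn K ts n + K * (ts (2 * n + 2)%nat - ts (2 * n + 1)%nat).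
Proof. reflexivity. Qed.

Lemma Lglob N d psi K ts x v (H : HH N d psi K ts x v) :
  (forall p, ts (2 * p + 2)%nat - ts (2 * p + 1)%nat < ln 2 / K) ->
  forall n, Lf N d psi x v (ts (2 * n)%nat) <= Lf N d psi x v (ts O) * exp (12 * Tn K ts n).
Proof. intros Hng n. assert (Hpsi := HH_HHpsi _ _ _ _ _ _ _ H).
  assert (H' := H). destruct H' as [HN [Hp [Hc [HK [Kp [H0 [Hinc Hsol]]]]]]].
  induction n. simpl. unfold Tn; simpl. rewrite Rmult_0_r, exp_0. lra.
  replace (2 * S n)%nat with (2 * n + 2)%nat by lia.
  assert (A := LNeg N d psi K ts x v n H (Hng n) (ts (2 * n + 2)%nat)).
  assert (B := LPos N d psi K ts x v n H (ts (2 * n + 1)%nat)).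
  assert (Hab : ts (2 * n + 1)%nat <= ts (2 * n + 2)%nat) by (apply ts_le; auto; lia).
  assert (Hab' : ts (2 * n)%nat <= ts (2 * n + 1)%nat) by (apply ts_le; auto; lia).
  specialize (A ltac:(lra)). specialize (B ltac:(lra)).
  rewrite Tn_S, Rmult_plus_distr_l, exp_plus.
  set (e1 := exp (12 * (K * (ts (2 * n + 2)%nat - ts (2 * n + 1)%nat)))) in *.
  assert (0 < e1) by apply exp_pos.
  eapply Rle_trans. apply A. rewrite <- Rmult_assoc. apply Rmult_le_compat_r. lra. lra. Qed.

Lemma Tn_mono K ts n : 0 < K -> (forall n, ts n < ts (S n)) -> Tn K ts n <= Tn K ts (S n).
Proof. intros Kp Hinc. rewrite Tn_S. assert (ts (2 * n + 1)%nat < ts (2 * n + 2)%nat) by (apply ts_lt; auto; lia). nra. Qed.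

Lemma Lall N d psi K ts x v (H : HH N d psi K ts x v) :
  (forall p, ts (2 * p + 2)%nat - ts (2 * p + 1)%nat < ln 2 / K) ->
  forall n t, ts (2 * n)%nat <= t <= ts (2 * n + 2)%nat -> Lf N d psi x v t <= Lf N d psi x v (ts O) * exp (12 * Tn K ts (S n)).
Proof. intros Hng n t Ht. assert (Hpsi := HH_HHpsi _ _ _ _ _ _ _ H).
  assert (H' := H). destruct H' as [HN [Hp [Hc [HK [Kp [H0 [Hinc Hsol]]]]]]].
  assert (G := Lglob N d psi K ts x v H Hng n).
  assert (L0 := Lf_nonneg N d psi K x v (ts O) Hpsi).
  assert (M := Tn_mono K ts n Kp Hinc).
  assert (EM : exp (12 * Tn K ts n) <= exp (12 * Tn K ts (S n))) by (apply exp_le; lra).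
  assert (Hab' : ts (2 * n)%nat <= ts (2 * n + 1)%nat) by (apply ts_le; auto; lia).
  destruct (Rle_or_lt t (ts (2 * n + 1)%nat)).
  - assert (B := LPos N d psi K ts x v n H t ltac:(lra)).
    assert (Lf N d psi x v (ts O) * exp (12 * Tn K ts n) <= Lf N d psi x v (ts O) * exp (12 * Tn K ts (S n))) by (apply Rmult_le_compat_l; auto).
    lra.
  - assert (A := LNeg N d psi K ts x v n H (Hng n) t ltac:(lra)).
    assert (B := LPos N d psi K ts x v n H (ts (2 * n + 1)%nat) ltac:(lra)).
    rewrite Tn_S, Rmult_plus_distr_l, exp_plus.
    set (e1 := exp (12 * (K * (ts (2 * n + 2)%nat - ts (2 * n + 1)%nat)))) in *.
    assert (0 < e1) by apply exp_pos.
    eapply Rle_trans. apply A. rewrite <- Rmult_assoc. apply Rmult_le_compat_r. lra. lra. Qed.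

Lemma exp_4ln2 : exp (4 * ln 2) = 16.
Proof. replace (4 * ln 2) with (2 * ln 2 + 2 * ln 2) by ring. rewrite exp_plus, exp_2ln2. ring. Qed.

Lemma Vstep N d psi K ts x v m (H : HH N d psi K ts x v) :
  (forall p, ts (2 * p + 2)%nat - ts (2 * p + 1)%nat < ln 2 / K) ->
  (forall p, ts (2 * p + 1)%nat - ts (2 * p)%nat > 1 / K) -> 0 < m ->
  (forall s, 0 <= s -> forall i j, (i < N)%nat -> (j < N)%nat -> i <> j -> m <= psi (edist d (x i) (x j) s)) ->
  forall n, PP N d v (ts (2 * n)%nat) <= PP N d v (ts O) * exp (-2 * m / K) ^ n * exp (4 * Tn K ts n) /\
  forall t, ts (2 * n)%nat <= t <= ts (2 * n + 2)%nat -> PP N d v t <= 16 * PP N d v (ts (2 * n)%nat).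
Proof. intros Hng Hps Hm0 Hm. assert (H' := H). destruct H' as [HN [Hp [Hc [HK [Kp [H0 [Hinc Hsol]]]]]]].
  assert (Hts : forall n, 0 <= ts n) by (intros; rewrite <- H0; apply ts_le; auto; lia).
  assert (Pos : forall n t, ts (2 * n)%nat <= t <= ts (2 * n + 1)%nat ->
     PP N d v t <= PP N d v (ts (2 * n)%nat) * exp (- 2 * m * (t - ts (2 * n)%nat))).
  { intros n t Ht. apply (EvPos N d psi K ts x v n m H); auto. intros s Hs. apply Hm. specialize (Hts (2 * n)%nat). lra. }
  assert (Kab : forall n, 4 * (K * (ts (2 * n + 2)%nat - ts (2 * n + 1)%nat)) < 4 * ln 2).
  { intros n. specialize (Hng n). assert (K * (ts (2 * n + 2)%nat - ts (2 * n + 1)%nat) < ln 2).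
    { apply Rmult_lt_reg_r with (/ K). apply Rinv_0_lt_compat; lra.
      replace (K * (ts (2 * n + 2)%nat - ts (2 * n + 1)%nat) * / K) with (ts (2 * n + 2)%nat - ts (2 * n + 1)%nat) by (field; lra). auto. }
    lra. }
  intros n. split.
  - induction n. simpl. unfold Tn; simpl. rewrite Rmult_0_r, exp_0. lra.
    replace (2 * S n)%nat with (2 * n + 2)%nat by lia.
    assert (Hab : ts (2 * n + 1)%nat <= ts (2 * n + 2)%nat) by (apply ts_le; auto; lia).
    assert (Hab' : ts (2 * n)%nat <= ts (2 * n + 1)%nat) by (apply ts_le; auto; lia).
    assert (A := EvNeg N d psi K ts x v n H (ts (2 * n + 2)%nat) ltac:(lra)).
    assert (B := Pos n (ts (2 * n + 1)%nat) ltac:(lra)).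
    assert (Q : exp (-2 * m * (ts (2 * n + 1)%nat - ts (2 * n)%nat)) <= exp (-2 * m / K)).
    { apply exp_le. specialize (Hps n). unfold Rdiv. apply Rmult_le_compat_neg_l. lra.
      unfold Rdiv in Hps. lra. }
    rewrite Tn_S. rewrite Rmult_plus_distr_l, exp_plus. simpl pow.
    replace (4 * K * (ts (2 * n + 2)%nat - ts (2 * n + 1)%nat)) with (4 * (K * (ts (2 * n + 2)%nat - ts (2 * n + 1)%nat))) in A by ring.
    set (e1 := exp (4 * (K * (ts (2 * n + 2)%nat - ts (2 * n + 1)%nat)))) in *.
    set (q := exp (-2 * m / K)) in *.
    assert (0 < e1) by apply exp_pos. assert (0 < q) by apply exp_pos.
    assert (0 <= PP N d v (ts (2 * n)%nat)) by apply PP_nonneg.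
    assert (PP N d v (ts (2 * n + 1)%nat) <= PP N d v (ts (2 * n)%nat) * q).
    { eapply Rle_trans. apply B. apply Rmult_le_compat_l; auto. }
    assert (PP N d v (ts (2 * n + 2)%nat) <= PP N d v (ts (2 * n)%nat) * q * e1).
    { eapply Rle_trans. apply A. apply Rmult_le_compat_r; lra. }
    eapply Rle_trans. apply H5.
    replace (PP N d v (ts 0%nat) * (q * q ^ n) * (exp (4 * Tn K ts n) * e1)) with
      ((PP N d v (ts 0%nat) * q ^ n * exp (4 * Tn K ts n)) * q * e1) by ring.
    apply Rmult_le_compat_r. lra. apply Rmult_le_compat_r. lra. auto.
  - intros t Ht. assert (Hab' : ts (2 * n)%nat <= ts (2 * n + 1)%nat) by (apply ts_le; auto; lia).
    assert (0 <= PP N d v (ts (2 * n)%nat)) by apply PP_nonneg.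
    assert (0 <= PP N d v t) by apply PP_nonneg.
    destruct (Rle_or_lt t (ts (2 * n + 1)%nat)).
    + assert (B := Pos n t ltac:(lra)).
      assert (exp (-2 * m * (t - ts (2 * n)%nat)) <= 1) by (rewrite <- exp_0; apply exp_le; nra).
      assert (PP N d v (ts (2 * n)%nat) * exp (-2 * m * (t - ts (2 * n)%nat)) <= PP N d v (ts (2 * n)%nat) * 1) by (apply Rmult_le_compat_l; auto).
      lra.
    + assert (A := EvNeg N d psi K ts x v n H t ltac:(lra)).
      assert (B := Pos n (ts (2 * n + 1)%nat) ltac:(lra)).
      assert (exp (-2 * m * (ts (2 * n + 1)%nat - ts (2 * n)%nat)) <= 1) by (rewrite <- exp_0; apply exp_le; nra).
      assert (exp (4 * K * (t - ts (2 * n + 1)%nat)) <= 16).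
      { rewrite <- exp_4ln2. apply exp_le. specialize (Kab n). nra. }
      assert (0 <= PP N d v (ts (2 * n + 1)%nat)) by apply PP_nonneg.
      assert (PP N d v (ts (2 * n + 1)%nat) <= PP N d v (ts (2 * n)%nat)).
      { eapply Rle_trans. apply B. rewrite <- (Rmult_1_r (PP N d v (ts (2 * n)%nat))) at 2. apply Rmult_le_compat_l; auto. }
      eapply Rle_trans. apply A. assert (0 < exp (4 * K * (t - ts (2 * n + 1)%nat))) by apply exp_pos. nra. Qed.

Theorem theorem6p1 (N d : nat) (psi : R -> R) (K : R) (ts : nat -> R)
  (HN : (2 <= N)%nat) (Hd : (1 <= d)%nat)
  (Hpos : forall r, 0 < psi r)
  (Hbdd : exists M, forall r, Rabs (psi r) <= M)
  (Hcont : forall r, continuous psi r)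
  (HK : is_lub (fun y => exists r, y = Rabs (psi r)) K)
  (Hint : is_lim (fun X => RInt (psi_min psi) 0 X) p_infty p_infty)
  (Ht0 : ts O = 0)
  (Hinc : forall n, ts n < ts (S n))
  (Hinf : is_lim_seq ts p_infty)
  (Hneg : forall n, ts (2 * n + 2)%nat - ts (2 * n + 1)%nat < ln 2 / K)
  (Hposg : forall n, ts (2 * n + 1)%nat - ts (2 * n)%nat > 1 / K)
  (Hser : ex_series (fun p =>
     ln (exp (K * (ts (2 * p + 2)%nat - ts (2 * p + 1)%nat)) /
         (2 - exp (K * (ts (2 * p + 2)%nat - ts (2 * p + 1)%nat))))))
  (x v : nat -> nat -> R -> R)
  (Hsol : is_solution N d psi ts x v) :
  (exists dstar, 0 < dstar /\ forall t, 0 <= t -> dX N d x t <= dstar) /\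
  is_lim (fun t => dX N d v t) p_infty 0.
Proof.
  assert (HK' : forall r, psi r <= K).
  { intros r. destruct HK as [Hub _]. assert (A : Rabs (psi r) <= K) by (apply Hub; exists r; auto). rewrite Rabs_right in A. exact A. apply Rle_ge. left. auto. }
  assert (Kp : 0 < K) by (specialize (HK' 0); specialize (Hpos 0); lra).
  assert (H : HH N d psi K ts x v) by exact (conj HN (conj Hpos (conj Hcont (conj HK' (conj Kp (conj Ht0 (conj Hinc Hsol))))))).
  assert (Hpsi := HH_HHpsi _ _ _ _ _ _ _ H).
  set (term := fun p => ln (exp (K * (ts (2 * p + 2)%nat - ts (2 * p + 1)%nat)) /
         (2 - exp (K * (ts (2 * p + 2)%nat - ts (2 * p + 1)%nat))))) in *.
  assert (Hterm : forall p, K * (ts (2 * p + 2)%nat - ts (2 * p + 1)%nat) <= term p).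
  { intros p. apply term_ge. assert (ts (2 * p + 1)%nat < ts (2 * p + 2)%nat) by (apply ts_lt; auto; lia). nra.
    specialize (Hneg p). apply Rmult_lt_reg_r with (/ K). apply Rinv_0_lt_compat; lra.
    replace (K * (ts (2 * p + 2)%nat - ts (2 * p + 1)%nat) * / K) with (ts (2 * p + 2)%nat - ts (2 * p + 1)%nat) by (field; lra). auto. }
  assert (Hterm0 : forall p, 0 <= term p).
  { intros p. eapply Rle_trans; [|apply Hterm]. assert (ts (2 * p + 1)%nat < ts (2 * p + 2)%nat) by (apply ts_lt; auto; lia). nra. }
  set (Sser := Series term).
  assert (HT : forall n, Tn K ts n <= Sser).
  { intros n. eapply Rle_trans. apply rsum_le. intros m _. apply Hterm. apply series_bound; auto. }
  assert (Hts : forall n, 0 <= ts n) by (intros; rewrite <- Ht0; apply ts_le; auto; lia).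
  set (Lmax := Lf N d psi x v (ts O) * exp (12 * Sser)).
  assert (HL : forall t, 0 <= t -> Lf N d psi x v t <= Lmax).
  { intros t Ht. destruct (cover ts t Hinc Hinf ltac:(lra)) as [p Hp].
    eapply Rle_trans. apply (Lall N d psi K ts x v H Hneg p t Hp). apply Rmult_le_compat_l.
    apply (Lf_nonneg N d psi K x v (ts O) Hpsi). apply exp_le. specialize (HT (S p)). lra. }
  apply is_lim_spec in Hint. destruct (Hint Lmax) as [M0 HM0].
  assert (HX : forall t, 0 <= t -> sqrt (PP N d x t) <= M0).
  { intros t Ht. destruct (Rle_or_lt (sqrt (PP N d x t)) M0) as [|Hlt]; auto. exfalso.
    specialize (HM0 _ Hlt). rewrite Phi_RInt in HM0 by apply sqrt_pos.
    specialize (HL t Ht). unfold Lf in HL. generalize (sqrt_pos (PP N d v t)). lra. }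
  set (D := Rmax M0 1).
  assert (HD1 : 1 <= D) by apply Rmax_r. assert (HDM : M0 <= D) by apply Rmax_l.
  split.
  { exists D. split. lra. intros t Ht. eapply Rle_trans. apply dX_le. specialize (HX t Ht). lra. }
  set (m := psi_min psi D).
  assert (Hm0 : 0 < m).
  { destruct (pm_attain psi D Hcont ltac:(lra)) as [[r [_ E]] _]. unfold m. rewrite E. auto. }
  assert (Hm : forall s, 0 <= s -> forall i j, (i < N)%nat -> (j < N)%nat -> i <> j -> m <= psi (edist d (x i) (x j) s)).
  { intros s Hs i j Hi Hj _. apply (pm_attain psi D Hcont ltac:(lra)). split. apply edist_nonneg.
    eapply Rle_trans. apply (edist_le N); auto. specialize (HX s Hs). lra. }
  assert (VS := Vstep N d psi K ts x v m H Hneg Hposg Hm0 Hm).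
  set (q := exp (-2 * m / K)) in *.
  assert (Hq : 0 < q < 1).
  { split. apply exp_pos. unfold q. rewrite <- exp_0. apply exp_increasing.
    unfold Rdiv. assert (0 < / K) by (apply Rinv_0_lt_compat; lra). nra. }
  set (Cst := 16 * PP N d v (ts O) * exp (4 * Sser)).
  assert (HC0 : 0 <= Cst) by (unfold Cst; assert (0 <= PP N d v (ts O)) by apply PP_nonneg;
     assert (0 < exp (4 * Sser)) by apply exp_pos; nra).
  assert (HB : forall n t, ts (2 * n)%nat <= t <= ts (2 * n + 2)%nat -> PP N d v t <= Cst * q ^ n).
  { intros n t Ht. destruct (VS n) as [A B]. specialize (B t Ht).
    assert (exp (4 * Tn K ts n) <= exp (4 * Sser)) by (apply exp_le; specialize (HT n); lra).
    assert (0 <= PP N d v (ts O)) by apply PP_nonneg.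
    assert (0 < q ^ n) by (apply pow_lt; lra).
    assert (PP N d v (ts O) * q ^ n * exp (4 * Tn K ts n) <= PP N d v (ts O) * q ^ n * exp (4 * Sser)).
    { apply Rmult_le_compat_l; auto. apply Rmult_le_pos; lra. }
    unfold Cst. nra. }
  apply is_lim_spec. intros eps. simpl.
  assert (G := is_lim_seq_geom q ltac:(rewrite Rabs_right; lra)).
  apply is_lim_seq_spec in G.
  assert (Heps' : 0 < eps * eps / (Cst + 1)).
  { apply Rdiv_lt_0_compat. generalize (cond_pos eps); nra. lra. }
  destruct (G (mkposreal _ Heps')) as [n0 Hn0]. simpl in Hn0.
  exists (ts (2 * n0)%nat). intros t Ht.
  assert (Ht0' : 0 <= t) by (specialize (Hts (2 * n0)%nat); lra).
  destruct (cover ts t Hinc Hinf ltac:(rewrite Ht0; lra)) as [p Hp].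
  assert (Hpn : (n0 <= p)%nat).
  { destruct (le_lt_dec n0 p); auto. exfalso.
    assert (ts (2 * p + 2)%nat <= ts (2 * n0)%nat) by (apply ts_le; auto; lia). lra. }
  specialize (Hn0 p Hpn). rewrite Rminus_0_r, Rabs_right in Hn0 by (left; apply pow_lt; lra).
  assert (Hdx0 : 0 <= dX N d v t) by (unfold dX; apply rmax_nonneg).
  rewrite Rminus_0_r, Rabs_right by lra.
  eapply Rle_lt_trans. apply dX_le.
  assert (0 < q ^ p) by (apply pow_lt; lra).
  assert (Cst * q ^ p < eps * eps).
  { assert (q ^ p * (Cst + 1) < eps * eps).
    { apply Rmult_lt_reg_r with (/ (Cst + 1)). apply Rinv_0_lt_compat; lra.
      replace (q ^ p * (Cst + 1) * / (Cst + 1)) with (q ^ p) by (field; lra). auto. }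
    nra. }
  eapply Rle_lt_trans. apply sqrt_le_1_alt. apply (HB p t Hp).
  rewrite <- (sqrt_ee eps) by (left; apply cond_pos). apply sqrt_lt_1_alt. split.
  apply Rmult_le_pos; lra. auto. Qed.
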